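(* Let $G$ be an abelian group and $S\subseteq G$ a finite nonempty set that tiles $G$ by translation. Then every $S$-polychromatic coloring of $G$ with $|S|$ colors is also a $(-S)$-polychromatic coloring, where $-S=\{-s:s\in S\}$.
   Context: For $A\subseteq G$, a coloring of $G$ is $A$-polychromatic if every translate $n+A=\{n+a:a\in A\}$, $n\in G$, contains an element of each color. $S$ tiles $G$ by translation if there is $T\subseteq G$ with $S+T=G$ such that $s_1+t_1=s_2+t_2$ with $s_i\in S$, $t_i\in T$ implies $s_1=s_2$ and $t_1=t_2$. *)

(* Defs.v *)
From HB Require Import structures.
From mathcomp Require Import all_boot all_order all_algebra.
Set Implicit Arguments. Unset Strict Implicit. Unset Printing Implicit Defensive.
Import GRing.Theory.
Local Open Scope ring_scope.

(* An abelian group G is a zmodType.  A finite subset S of G is given as a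
   duplicate-free sequence; a coloring with k colors is a map G -> 'I_k. *)

Definition polychromatic (G : zmodType) (A : seq G) (k : nat) (c : G -> 'I_k) : Prop :=
  forall (n : G) (i : 'I_k), exists2 a, a \in A & c (n + a) = i.

Definition tiles (G : zmodType) (S : seq G) : Prop :=
  exists T : G -> Prop,
    (forall g : G, exists s t, [/\ s \in S, T t & s + t = g]) /\
    (forall s1 s2 t1 t2, s1 \in S -> s2 \in S -> T t1 -> T t2 ->
        s1 + t1 = s2 + t2 -> s1 = s2 /\ t1 = t2).

Definition negS (G : zmodType) (S : seq G) : seq G := map (fun s => - s) S.

(* Main.v *)
Require Import Defs.
From HB Require Import structures.
From mathcomp Require Import all_boot all_order all_algebra.
Import GRing.Theory.
Local Open Scope ring_scope.

Lemma uniq_map_inj (T1 T2 : eqType) (f : T1 -> T2) (s : seq T1) :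
  uniq (map f s) -> {in s &, injective f}.
Proof.
elim: s => [|a s IH] //= /andP[Ha Hu] x y.
rewrite !inE => /orP[/eqP->|Hx] /orP[/eqP->|Hy] //= E.
- by move: Ha; rewrite E map_f.
- by move: Ha; rewrite -E map_f.
- exact: IH.
Qed.

Lemma poly_inj (G : zmodType) (S : seq G) (c : G -> 'I_(size S)) :
  uniq S -> polychromatic S c -> forall m : G,
  {in S &, forall s1 s2, c (m + s1) = c (m + s2) -> s1 = s2}.
Proof.
move=> uS P m.
have U : uniq [seq c (m + s) | s <- S].
  apply: (leq_size_uniq (enum_uniq 'I_(size S))).
    move=> i _; have [a aS E] := P m i; apply/mapP; by exists a.
  by rewrite size_map size_enum_ord.
move=> s1 s2 H1 H2 E; have := @uniq_map_inj _ _ (fun s => c (m + s)) S U s1 s2 H1 H2; apply; exact E.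
Qed.

Theorem corollary15 (G : zmodType) (S : seq G) :
  uniq S -> S != [::] -> tiles S ->
  forall c : G -> 'I_(size S),
    polychromatic S c -> polychromatic (negS S) c.
Proof.
move=> uS nS _ c P n i.
have [s0 s0S] : exists s0, s0 \in S.
  by case: (S) nS => [|a l] // _; exists a; rewrite inE eqxx.
pose g := n - s0.
pose phi := fun s' => head 0 [seq s <- S | c (g - s' + s) == i].
have Hphi : forall s', s' \in S -> phi s' \in S /\ c (g - s' + phi s') = i.
  move=> s' _; have [a aS E] := P (g - s') i.
  have hs : has (fun s => c (g - s' + s) == i) S by apply/hasP; exists a => //; apply/eqP.
  rewrite /phi; case Ef: (filter _ S) => [|b l] /=.
    by move: hs; rewrite has_filter Ef.
  have : b \in [seq s <- S | c (g - s' + s) == i] by rewrite Ef inE eqxx.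
  by rewrite mem_filter => /andP[/eqP Eb bS]; split.
have inj := @poly_inj G S c uS P.
have Uphi : uniq (map phi S).
  rewrite map_inj_in_uniq // => s1 s2 H1 H2 E.
  have [_ E1] := Hphi _ H1; have [_ E2] := Hphi _ H2.
  set s := phi s2 in E E1 E2; rewrite E in E1.
  apply: (inj (g + s - s1 - s2)) => //.
  have e1 : g + s - s1 - s2 + s1 = g - s2 + s.
    by rewrite addrAC subrK addrAC.
  have e2 : g + s - s1 - s2 + s2 = g - s1 + s.
    by rewrite subrK addrAC.
  by rewrite e1 e2 E1 E2.
have sub : {subset map phi S <= S}.
  by move=> x /mapP[s' H ->]; case: (Hphi _ H).
have sz : (size S <= size (map phi S))%N by rewrite size_map.
have [_ Eq] := uniq_min_size Uphi sub sz.
have : s0 \in map phi S by rewrite Eq.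
case/mapP => s' H E.
exists (- s'); first by rewrite /negS map_f.
have [_ E1] := Hphi _ H; rewrite -E1 -E /g; congr (c _).
by rewrite /g addrAC subrK.
Qed.
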